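(* Assume $\langle f\rangle_X=0$ and that $\psi$ satisfies (A1) and (A2); let $u^H$ be the solution of the HQC problem, $u^{H,c}$ its reconstruction, and $\hat u^{H,c}(X_i)=u^H(X_i)+\epsilon\chi(X_i,X_i/\epsilon)Du^H(X_i)$. Then there exist constants $C_{13},C_{14}$, depending only on $c_\psi,C_\psi,C'_\psi$ and $p$ (independent of $\epsilon$, $H$, $f$), such that \[ |\hat u^{H,c}-u^{H,c}|_{H^1}\le C_{13}H|f|_{H^{-1}},\qquad \|\hat u^{H,c}-u^{H,c}\|_{L^2}\le C_{14}\,\epsilon H|f|_{H^{-1}}. \]
   Context: Let $\epsilon>0$, $N,p$ positive integers with $N/p\in\mathbb N$ and normalization $N\epsilon=1$; $X_i=\epsilon i$, $Y_j=j$. $U^N_{\rm per}(\epsilon\mathbb Z)$: functions $u:\epsilon\mathbb Z\to\mathbb R$ with $u(X_{i+N})=u(X_i)$; $U^N_\#(\epsilon\mathbb Z)$: those with $\langle u\rangle_X:=\frac1N\sum_{i=1}^Nu(X_i)=0$. $\langle u,v\rangle_X=\frac1N\sum_{i=1}^Nu(X_i)v(X_i)$, $Du(X_i)=(u(X_{i+1})-u(X_i))/\epsilon$, $\|u\|_{L^2}=\langle u,u\rangle_X^{1/2}$, $|u|_{H^1}=\|Du\|_{L^2}$, $|u|_{H^{-1}}=\sup\{\langle u,w\rangle_X/|w|_{H^1}:0\ne w\in U^N_\#(\epsilon\mathbb Z)\}$. $U^p_\#(\epsilon\mathbb Z)$: $p$-periodic functions on $\epsilon\mathbb Z$ with $\sum_{i=1}^pw(X_i)=0$.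 Two-scale functions $g:\epsilon\mathbb Z\times\mathbb Z\to\mathbb R$ satisfy $g(X_{i+N},Y_j)=g(X_i,Y_j)=g(X_i,Y_{j+p})$; $D_Xg(X_i,Y_j)=(g(X_{i+1},Y_j)-g(X_i,Y_j))/\epsilon$, $D_Yg(X_i,Y_j)=g(X_i,Y_{j+1})-g(X_i,Y_j)$, $\|g\|_{L^\infty(N,p)}=\max_{1\le i\le N,1\le j\le p}|g|$. $\psi$ is a two-scale function with (A1) $0<c_\psi\le\psi\le C_\psi$ and (A2) $\|D_X\psi\|_{L^\infty(N,p)}\le C'_\psi$. Cell solution $\chi$: two-scale with $\frac1p\sum_{j=1}^p\chi(X_i,Y_j)=0$ and $-D_Y(\psi D_Y\chi)=D_Y\psi$ everywhere. $f\in U^N_{\rm per}(\epsilon\mathbb Z)$. HQC method: indices $1=i_1<\dots<i_K\le N$, $i_{K+1}=N+1$, $S_k=\{X_i:i_k\le i<i_{k+1}\}$, $H_k=\epsilon(i_{k+1}-i_k)$, $H=\max_kH_k$. $U^H_{\rm per}$: $v\in U^N_{\rm per}(\epsilon\mathbb Z)$ affine on each $\{X_i:i_k\le i\le i_{k+1}\}$; $U^H_\#=U^H_{\rm per}\cap U^N_\#(\epsilon\mathbb Z)$. Sampling domains $S_k^{\rm rep}=\{X_i:i_k^{\rm rep}\le i<i_k^{\rm rep}+p\}\subset S_k$, collocation indices with $X_{i_k^{\rm coll}}\in S_k^{\rm rep}$, $\psi^\epsilon_{{\rm coll},k}(X_i)=\psi(X_{i_k^{\rm coll}},X_i/\epsilon)$,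 $\langle a,b\rangle_{S_k^{\rm rep}}=\frac1p\sum_{X_i\in S_k^{\rm rep}}a(X_i)b(X_i)$. For $v^H\in U^H_{\rm per}$ let $\ell_k$ be the affine function on $\epsilon\mathbb Z$ equal to $v^H$ on $S_k$; $\mathcal R_k(v^H)=\ell_k+w_k$ with $w_k\in U^p_\#(\epsilon\mathbb Z)$ such that $\langle\psi^\epsilon_{{\rm coll},k}D(\ell_k+w_k),Ds\rangle_{S_k^{\rm rep}}=0$ for all $s\in U^p_\#(\epsilon\mathbb Z)$. HQC problem: $u^H\in U^H_\#$ with $\sum_{k=1}^KH_k\langle\psi^\epsilon_{{\rm coll},k}D\mathcal R_k(u^H),D\mathcal R_k(v^H)\rangle_{S_k^{\rm rep}}=\langle f,v^H\rangle_X$ for all $v^H\in U^H_\#$. Reconstruction: $u^{H,c}(X_i)=u^H(X_i)+w_k(X_i)$ for $X_i\in S_k$, with $w_k=\mathcal R_k(u^H)-\ell_k$ computed for $u^H$. *)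

(* Defs.v *)
From HB Require Import structures.
From mathcomp Require Import all_boot all_order all_algebra.
From mathcomp Require Import boolp classical_sets reals.
Set Implicit Arguments. Unset Strict Implicit. Unset Printing Implicit Defensive.
Import Order.TTheory GRing.Theory Num.Theory.
Local Open Scope ring_scope.

Section Defs.
Variable R : realType.

(* Grid functions on eps*Z are represented by their values at indices:
   u : int -> R with u i = u(X_i), X_i = eps*i.
   Two-scale functions g : int -> int -> R with g i j = g(X_i, Y_j). *)

Definition periodic (n : nat) (u : int -> R) : Prop :=
  forall i : int, u (i + n%:Z) = u i.

Definition ip (n : nat) (a b : int -> R) : R :=
  n%:R^-1 * \sum_(1 <= i < n.+1) a i%:Z * b i%:Z.

Definition mean (n : nat) (u : int -> R) : R := ip n u (fun _ => 1).

Definition Uper (n : nat) (u : int -> R) : Prop := periodic n u.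
Definition Usharp (n : nat) (u : int -> R) : Prop :=
  periodic n u /\ \sum_(1 <= i < n.+1) u i%:Z = 0.

Definition Dop (eps : R) (u : int -> R) : int -> R :=
  fun i => (u (i + 1) - u i) / eps.

Definition L2 (N : nat) (u : int -> R) : R := Num.sqrt (ip N u u).
Definition H1 (N : nat) (eps : R) (u : int -> R) : R := L2 N (Dop eps u).

Definition Hm1 (N : nat) (eps : R) (f : int -> R) : R :=
  sup [set r | exists w : int -> R,
         [/\ Usharp N w, w <> (fun _ => 0) & r = ip N f w / H1 N eps w]].

Definition DX (eps : R) (g : int -> int -> R) : int -> int -> R :=
  fun i j => (g (i + 1) j - g i j) / eps.
Definition DY (g : int -> int -> R) : int -> int -> R :=
  fun i j => g i (j + 1) - g i j.

Definition two_scale (N p : nat) (g : int -> int -> R) : Prop :=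
  forall i j : int, g (i + N%:Z) j = g i j /\ g i (j + p%:Z) = g i j.

Definition cell_solution (N p : nat) (psi chi : int -> int -> R) : Prop :=
  [/\ two_scale N p chi,
      (forall i : int, p%:R^-1 * \sum_(1 <= j < p.+1) chi i j%:Z = 0) &
      (forall i j : int,
          - DY (fun a b => psi a b * DY chi a b) i j = DY psi i j)].

(* ---------------- HQC mesh data ----------------
   idx k = i_{k+1} (0-based k), k = 0..K ; irep k = i^rep_{k+1},
   icoll k = i^coll_{k+1}. *)
Definition Hk (eps : R) (idx : nat -> int) (k : nat) : R :=
  eps * (idx k.+1 - idx k)%:~R.

Definition Hmax (eps : R) (idx : nat -> int) (K : nat) : R :=
  \big[Num.max/0]_(k < K) Hk eps idx k.

Definition UHper (N : nat) (eps : R) (idx : nat -> int) (K : nat)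
  (v : int -> R) : Prop :=
  periodic N v /\
  forall k, (k < K)%N -> exists a b : R, forall i : int,
      idx k <= i <= idx k.+1 -> v i = a + b * (eps * i%:~R).
Definition UHsharp N eps idx K (v : int -> R) : Prop :=
  UHper N eps idx K v /\ Usharp N v.

Definition ell (idx : nat -> int) (k : nat) (v : int -> R) : int -> R :=
  fun i => v (idx k) + (i - idx k)%:~R *
             ((v (idx k.+1) - v (idx k)) / (idx k.+1 - idx k)%:~R).

Definition ip_rep (p : nat) (irep : nat -> int) (k : nat) (a b : int -> R) : R :=
  p%:R^-1 * \sum_(0 <= m < p) a (irep k + m%:Z) * b (irep k + m%:Z).

(* psi^eps_{coll,k}(X_i) = psi(X_{i_k^coll}, X_i/eps) = psi(icoll k, i) *)
Definition psi_coll (psi : int -> int -> R) (icoll : nat -> int) (k : nat) :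
  int -> R := fun i => psi (icoll k) i.

(* the defining conditions of w_k in R_k(v^H) = l_k + w_k *)
Definition cell_corr (p : nat) (eps : R) (psi : int -> int -> R)
  (irep icoll : nat -> int) (idx : nat -> int) (k : nat) (v w : int -> R) :
  Prop :=
  Usharp p w /\
  forall s : int -> R, Usharp p s ->
    ip_rep p irep k
      (fun i => psi_coll psi icoll k i *
                  Dop eps (fun j => ell idx k v j + w j) i)
      (Dop eps s) = 0.

Definition wcorr p eps psi irep icoll idx k (v : int -> R) : int -> R :=
  xget (fun _ => 0) [set w | cell_corr p eps psi irep icoll idx k v w].

Definition Rk p eps psi irep icoll idx k (v : int -> R) : int -> R :=
  fun i => ell idx k v i + wcorr p eps psi irep icoll idx k v i.

Definition BHQC p eps psi irep icoll idx (K : nat) (u v : int -> R) : R :=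
  \sum_(k < K) Hk eps idx k *
    ip_rep p irep k
      (fun i => psi_coll psi icoll k i *
                  Dop eps (Rk p eps psi irep icoll idx k u) i)
      (Dop eps (Rk p eps psi irep icoll idx k v)).

Definition HQC_solution N p eps psi irep icoll idx K (f uH : int -> R) : Prop :=
  UHsharp N eps idx K uH /\
  forall vH, UHsharp N eps idx K vH ->
    BHQC p eps psi irep icoll idx K uH vH = ip N f vH.

Definition reconstruction N p eps psi irep icoll idx K (uH uHc : int -> R) :
  Prop :=
  periodic N uHc /\
  forall k, (k < K)%N -> forall i : int, idx k <= i < idx k.+1 ->
    uHc i = uH i + wcorr p eps psi irep icoll idx k uH i.

Definition uhat (eps : R) (chi : int -> int -> R) (uH : int -> R) : int -> R :=
  fun i => uH i + eps * chi i i * Dop eps uH i.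

Definition HQC_mesh (N p : nat) (idx irep icoll : nat -> int) (K : nat) : Prop :=
  [/\ (0 < K)%N, idx 0%N = 1, idx K = (N.+1)%:Z,
      (forall k, (k < K)%N -> idx k < idx k.+1) &
      forall k, (k < K)%N ->
        (idx k <= irep k /\ irep k + p%:Z <= idx k.+1) /\
        (irep k <= icoll k < irep k + p%:Z)].


End Defs.

(* Main.v *)
Require Import Defs.
From HB Require Import structures.
From mathcomp Require Import all_boot all_order all_algebra.
From mathcomp Require Import boolp classical_sets reals.
From mathcomp Require Import ring lra zify.
Import Order.TTheory GRing.Theory Num.Theory.
Set Implicit Arguments. Unset Strict Implicit. Unset Printing Implicit Defensive.
Local Open Scope ring_scope.

Section Helpers.
Variable R : realType.

Lemma int_nat_ex (z : int) : 0 <= z -> exists n : nat, z = n%:Z.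
Proof. by case: z => // n _; exists n. Qed.

Lemma int_const (F : int -> R) : (forall a, F (a + 1) = F a) -> forall a b, F a = F b.
Proof.
move=> HF.
have H : forall (n : nat) a, F (a + n%:Z) = F a.
  elim=> [|n IH] a; first by rewrite addr0.
  by rewrite -addn1 PoszD addrA HF IH.
move=> a b; case: (lerP a b) => hab.
  have /int_nat_ex [n hn] : 0 <= b - a by rewrite subr_ge0.
  by rewrite (_ : b = a + n%:Z) ?H // -hn; ring.
have /int_nat_ex [n hn] : 0 <= a - b by rewrite subr_ge0 ltW.
by rewrite (_ : a = b + n%:Z) ?H // -hn; ring.
Qed.

Lemma per_mult (h : int -> R) (p : int) : (forall j, h (j + p) = h j) ->
  forall j k, h (j + k * p) = h j.
Proof.
move=> Hp j k.
have := @int_const (fun k => h (j + k * p)) _ k 0.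
rewrite mul0r addr0; apply => a.
by rewrite mulrDl mul1r addrA Hp.
Qed.

Lemma per_red (h : int -> R) (p : nat) : (0 < p)%N -> (forall j, h (j + p%:Z) = h j) ->
  forall a j, exists2 m : nat, (m < p)%N & h j = h (a + m%:Z).
Proof.
move=> p0 Hp a j.
have pz : (0 < p%:Z) by rewrite ltz_nat.
have /int_nat_ex [m hm] := modz_ge0 (j - a) (lt0r_neq0 pz).
exists m.
  by rewrite -ltz_nat -hm ltz_pmod.
have Hj : j = a + m%:Z + ((j - a) %/ p%:Z)%Z * p%:Z.
  have := divz_eq (j - a) p%:Z; rewrite hm; lia.
by rewrite {1}Hj per_mult.
Qed.

Lemma lip_steps (h : int -> R) (M : R) (a : int) (n : nat) :
  (forall j, a <= j < a + n%:Z -> `|h (j + 1) - h j| <= M) ->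
  `|h (a + n%:Z) - h a| <= n%:R * M.
Proof.
elim: n => [|n IH] H; first by rewrite addr0 subrr normr0 mul0r.
have IH' : `|h (a + n%:Z) - h a| <= n%:R * M by apply: IH => j hj; apply: H; lia.
have Hn : `|h (a + n%:Z + 1) - h (a + n%:Z)| <= M by apply: H; lia.
rewrite -addn1 PoszD addrA.
rewrite (_ : h (a + n%:Z + 1%:Z) - h a = (h (a + n%:Z + 1) - h (a + n%:Z)) + (h (a + n%:Z) - h a)); last by ring.
apply: le_trans (ler_normD _ _) _.
rewrite natrD mulrDl mul1r addrC; exact: lerD.
Qed.

Lemma lip_int (h : int -> R) (M : R) (a b : int) :
  a <= b -> (forall j, a <= j < b -> `|h (j + 1) - h j| <= M) ->
  `|h b - h a| <= (b - a)%:~R * M.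
Proof.
move=> hab H.
have /int_nat_ex [n hn] : 0 <= b - a by rewrite subr_ge0.
have hb : b = a + n%:Z by rewrite -hn; ring.
rewrite hn hb; apply: lip_steps => j hj; apply: H; lia.
Qed.


Lemma tele_int (g : int -> R) (a : int) (n : nat) :
  \sum_(0 <= m < n) (g (a + m%:Z + 1) - g (a + m%:Z)) = g (a + n%:Z) - g a.
Proof.
have := telescope_sumr (fun m => g (a + m%:Z)) (leq0n n).
rewrite addr0 => <-; apply: eq_bigr => m _.
by rewrite -addn1 PoszD addrA.
Qed.

Definition qf (psi chi : int -> int -> R) x j := psi x j * (1 + DY chi x j).
Definition Af (psi chi : int -> int -> R) x := qf psi chi x 0.
Definition Sf (p : nat) (psi : int -> int -> R) x := \sum_(0 <= m < p) (psi x (1 + m%:Z))^-1.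

Variables (N p : nat) (psi chi : int -> int -> R) (c C : R).
Hypothesis hcell : cell_solution N p psi chi.
Hypothesis hpsi : forall i j, c <= psi i j <= C.
Hypothesis hc : 0 < c.
Hypothesis hp : (0 < p)%N.

Lemma psi_pos i j : 0 < psi i j.
Proof. by case/andP: (hpsi i j) => h _; exact: lt_le_trans hc h. Qed.

Lemma q_const x j : qf psi chi x j = Af psi chi x.
Proof.
rewrite /Af; apply: (@int_const (fun j => qf psi chi x j)) => a.
case: hcell => _ _ /(_ x a); rewrite /qf /DY /= => H.
rewrite !mulrDr !mulr1 -!/(DY chi x _); move: H; rewrite /DY.
lra.
Qed.

Lemma DY_formula x j : DY chi x j = Af psi chi x / psi x j - 1.
Proof.
rewrite -(q_const x j) /qf mulrC mulrA mulVf ?mul1r; last by rewrite gt_eqF ?psi_pos.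
rewrite addrC addKr //.
Qed.

Lemma sumDY x : \sum_(0 <= m < p) DY chi x (1 + m%:Z) = 0.
Proof.
rewrite (eq_bigr (fun m => chi x (1 + m%:Z + 1) - chi x (1 + m%:Z))) //.
rewrite tele_int; case: hcell => /(_ x 1) [_ ->] _ _; exact: subrr.
Qed.

Lemma AS x : Af psi chi x * Sf p psi x = p%:R.
Proof.
have := sumDY x.
rewrite (eq_bigr (fun m => Af psi chi x * (psi x (1 + m%:Z))^-1 - 1)); last first.
  by move=> m _; rewrite DY_formula.
rewrite sumrB sumr_const_nat subn0 -mulr_sumr /Sf => /eqP.
by rewrite subr_eq0 => /eqP ->.
Qed.

Lemma S_bounds x : p%:R / C <= Sf p psi x <= p%:R / c.
Proof.
have hC : 0 < C by case/andP: (hpsi 0 0) => h1 h2; exact: lt_le_trans hc (le_trans h1 h2).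
rewrite /Sf; apply/andP; split.
  rewrite -[p%:R / C](_ : \sum_(0 <= m < p) C^-1 = _); last by rewrite sumr_const_nat subn0 mulr_natl.
  apply: ler_sum => m _; rewrite lef_pV2 ?posrE ?psi_pos //.
  by case/andP: (hpsi x (1 + m%:Z)).
rewrite -[p%:R / c](_ : \sum_(0 <= m < p) c^-1 = _); last by rewrite sumr_const_nat subn0 mulr_natl.
apply: ler_sum => m _; rewrite lef_pV2 ?posrE ?psi_pos //.
by case/andP: (hpsi x (1 + m%:Z)).
Qed.

Lemma S_pos x : 0 < Sf p psi x.
Proof.
have hC : 0 < C by case/andP: (hpsi 0 0) => h1 h2; exact: lt_le_trans hc (le_trans h1 h2).
case/andP: (S_bounds x) => h _; apply: lt_le_trans h.
by rewrite divr_gt0 // ltr0n.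
Qed.

Lemma A_bounds x : c <= Af psi chi x <= C.
Proof.
have hC : 0 < C by case/andP: (hpsi 0 0) => h1 h2; exact: lt_le_trans hc (le_trans h1 h2).
have hS := S_pos x; have hAS := AS x; case/andP: (S_bounds x) => h1 h2.
have hp' : (0 : R) < p%:R by rewrite ltr0n.
have e1 : p%:R / C * C = p%:R by rewrite mulfVK // gt_eqF.
have e2 : p%:R / c * c = p%:R by rewrite mulfVK // gt_eqF.
apply/andP; split; rewrite -(ler_pM2r hS) hAS.
  by rewrite -e2 mulrC ler_pM2r.
by rewrite -e1 [C * _]mulrC ler_pM2r.
Qed.

End Helpers.

Section Lip.
Variable R : realType.
Variables (N p : nat) (eps : R) (psi chi : int -> int -> R) (c C C' : R).
Hypothesis hcell : cell_solution N p psi chi.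
Hypothesis hpsi : forall i j, c <= psi i j <= C.
Hypothesis hc : 0 < c.
Hypothesis hp : (0 < p)%N.
Hypothesis hN : (0 < N)%N.
Hypothesis heps : 0 < eps.
Hypothesis hper : two_scale N p psi.
Hypothesis hDX : forall i j : int, 1 <= i <= N%:Z -> 1 <= j <= p%:Z ->
        `|DX eps psi i j| <= C'.

Definition Kc := C ^+ 2 / c ^+ 3 + C / c ^+ 2.
Definition Mb := eps * C' * Kc.

Lemma sum_shift (F : int -> R) n :
  \sum_(1 <= j < n.+1) F j%:Z = \sum_(0 <= m < n) F (1 + m%:Z).
Proof.
rewrite big_add1 /=; apply: eq_bigr => m _.
by rewrite -addn1 PoszD addrC.
Qed.

Lemma hC : 0 < C.
Proof. by case/andP: (hpsi 0 0) => h1 h2; exact: lt_le_trans hc (le_trans h1 h2). Qed.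

Lemma hC' : 0 <= C'.
Proof.
have h1 : (1 : int) <= 1 <= N%:Z by apply/andP; split; lia.
have h2 : (1 : int) <= 1 <= p%:Z by apply/andP; split; lia.
exact: le_trans (normr_ge0 _) (hDX h1 h2).
Qed.

Lemma Kc_ge0 : 0 <= Kc.
Proof.
have h := hC; have h' := hc; rewrite /Kc.
by apply: addr_ge0; apply: divr_ge0; apply: ltW; rewrite ?exprn_gt0.
Qed.

Lemma Mb_ge0 : 0 <= Mb.
Proof. by rewrite /Mb; apply: mulr_ge0; [apply: mulr_ge0; [exact: ltW|exact: hC']|exact: Kc_ge0]. Qed.

Lemma psi_step x j : 1 <= x <= N%:Z -> `|psi (x + 1) j - psi x j| <= eps * C'.
Proof.
move=> hx.
have hpj : forall j, psi (x + 1) (j + p%:Z) - psi x (j + p%:Z) = psi (x + 1) j - psi x j.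
  by move=> j'; case: (hper (x+1) j') => _ ->; case: (hper x j') => _ ->.
have [m hm e] := @per_red R (fun j => psi (x + 1) j - psi x j) p hp hpj 1 j.
rewrite /= in e; rewrite e.
have hj : 1 <= 1 + m%:Z <= p%:Z by apply/andP; split; lia.
have := hDX hx hj.
rewrite /DX normrM normfV (gtr0_norm heps) ler_pdivrMr // mulrC //.
Qed.


Lemma inv_step x j : 1 <= x <= N%:Z ->
  `|(psi (x + 1) j)^-1 - (psi x j)^-1| <= eps * C' / c ^+ 2.
Proof.
move=> hx; have hs := psi_step j hx.
have ha := psi_pos hpsi hc (x + 1) j; have hb := psi_pos hpsi hc x j.
have e : (psi (x + 1) j)^-1 - (psi x j)^-1 =
   (psi x j - psi (x + 1) j) * (psi (x + 1) j * psi x j)^-1.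
  by field; apply/andP; split; rewrite gt_eqF.
have hab : 0 < (psi (x + 1) j * psi x j)^-1 by rewrite invr_gt0 mulr_gt0.
rewrite e normrM distrC (gtr0_norm hab).
apply: (ler_pM (normr_ge0 _) (ltW hab) hs).
rewrite expr2 lef_pV2 ?posrE ?mulr_gt0 //.
case/andP: (hpsi (x+1) j) => h1 _; case/andP: (hpsi x j) => h2 _.
by apply: ler_pM => //; apply: ltW.
Qed.

Lemma S_step x : 1 <= x <= N%:Z ->
  `|Sf p psi (x + 1) - Sf p psi x| <= p%:R * (eps * C' / c ^+ 2).
Proof.
move=> hx; rewrite /Sf -sumrB.
apply: le_trans (ler_norm_sum _ _ _) _.
rewrite -[X in _ <= X](_ : \sum_(0 <= m < p) (eps * C' / c ^+ 2) = _); last first.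
  by rewrite sumr_const_nat subn0 mulr_natl.
by apply: ler_sum => m _; apply: inv_step.
Qed.

Lemma A_step x : 1 <= x <= N%:Z ->
  `|Af psi chi (x + 1) - Af psi chi x| <= C ^+ 2 * (eps * C' / c ^+ 2).
Proof.
move=> hx.
have hAS1 := AS hcell hpsi hc (x + 1); have hAS0 := AS hcell hpsi hc x.
have hp' : (0 : R) < p%:R by rewrite ltr0n.
have e : (Af psi chi (x + 1) - Af psi chi x) * p%:R =
   Af psi chi x * Af psi chi (x + 1) * (Sf p psi x - Sf p psi (x + 1)).
  rewrite mulrBl -{1}hAS0 -hAS1; ring.
have hb1 := A_bounds hcell hpsi hc hp (x + 1); have hb0 := A_bounds hcell hpsi hc hp x.
have h := S_step hx.
have hc0 : 0 <= c by exact: ltW.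
case/andP: hb1 => h11 h12; case/andP: hb0 => h01 h02.
have hdel : 0 <= eps * C' / c ^+ 2.
  by apply: divr_ge0; [apply: mulr_ge0; [exact: ltW | exact: hC'] | apply: exprn_ge0].
rewrite -(ler_pM2r hp').
have -> : `|Af psi chi (x + 1) - Af psi chi x| * p%:R =
   `|Af psi chi x| * `|Af psi chi (x + 1)| * `|Sf p psi (x + 1) - Sf p psi x|.
  by rewrite -{1}(ger0_norm (ltW hp')) -normrM e !normrM [`|Sf _ _ _ - _|]distrC.
rewrite (ger0_norm (le_trans hc0 h01)) (ger0_norm (le_trans hc0 h11)).
have -> : C ^+ 2 * (eps * C' / c ^+ 2) * p%:R = (C * C) * (p%:R * (eps * C' / c ^+ 2)) by ring.
apply: ler_pM => //.
  by apply: mulr_ge0; exact: le_trans hc0 _.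
apply: ler_pM => //; exact: le_trans hc0 _.
Qed.

Lemma g_step x j : 1 <= x <= N%:Z ->
  `|DY chi (x + 1) j - DY chi x j| <= Mb.
Proof.
move=> hx.
rewrite !(DY_formula hcell hpsi hc).
have hA := A_step hx; have hI := inv_step j hx.
have hb0 := A_bounds hcell hpsi hc hp x.
have ha := psi_pos hpsi hc (x + 1) j.
have hc0 : 0 <= c by exact: ltW.
case/andP: hb0 => h01 h02.
have e : Af psi chi (x + 1) / psi (x + 1) j - 1 - (Af psi chi x / psi x j - 1) =
  (Af psi chi (x + 1) - Af psi chi x) * (psi (x + 1) j)^-1 +
  Af psi chi x * ((psi (x + 1) j)^-1 - (psi x j)^-1) by ring.
rewrite e; apply: le_trans (ler_normD _ _) _.
have -> : Mb = C ^+ 2 * (eps * C' / c ^+ 2) * c^-1 + C * (eps * C' / c ^+ 2).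
  rewrite /Mb /Kc; field; exact: lt0r_neq0.
apply: lerD; rewrite normrM.
  apply: (ler_pM (normr_ge0 _) (normr_ge0 _) hA).
  rewrite (gtr0_norm); last by rewrite invr_gt0.
  rewrite lef_pV2 ?posrE //; by case/andP: (hpsi (x + 1) j).
apply: (ler_pM (normr_ge0 _) (normr_ge0 _) _ hI).
by rewrite (ger0_norm (le_trans hc0 h01)).
Qed.

Lemma v_bound x j : 1 <= x <= N%:Z ->
  `|chi (x + 1) j - chi x j| <= p%:R * Mb.
Proof.
move=> hx.
pose v := fun j => chi (x + 1) j - chi x j.
have hvper : forall j, v (j + p%:Z) = v j.
  by move=> j'; rewrite /v; case: hcell => /(_ (x+1) j') [_ ->] _ _; case: hcell => /(_ x j') [_ ->] _ _.
have hvstep : forall j, `|v (j + 1) - v j| <= Mb.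
  move=> j'; rewrite /v.
  have -> : chi (x + 1) (j' + 1) - chi x (j' + 1) - (chi (x + 1) j' - chi x j') =
    DY chi (x + 1) j' - DY chi x j' by rewrite /DY; ring.
  exact: g_step.
have hsum : \sum_(0 <= m < p) v (1 + m%:Z) = 0.
  rewrite /v sumrB -!(sum_shift (fun j => chi _ j)).
  case: hcell => _ hm _.
  have hp' : (p%:R : R)^-1 != 0 by rewrite invr_eq0 pnatr_eq0 -lt0n.
  have /eqP := hm (x + 1); rewrite mulf_eq0 (negbTE hp') /= => /eqP ->.
  have /eqP := hm x; rewrite mulf_eq0 (negbTE hp') /= => /eqP ->.
  by rewrite subrr.
have [m0 hm0 e] := per_red hp hvper 1 j.
rewrite -/(v j) e.
have hp' : (0 : R) < p%:R by rewrite ltr0n.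
rewrite -(ler_pM2l hp') -{1}(ger0_norm (ltW hp')) -normrM.
have -> : p%:R * v (1 + m0%:Z) = \sum_(0 <= m < p) (v (1 + m0%:Z) - v (1 + m%:Z)).
  by rewrite sumrB hsum subr0 sumr_const_nat subn0 mulr_natl.
apply: le_trans (ler_norm_sum _ _ _) _.
rewrite -[X in _ <= X](_ : \sum_(0 <= m < p) (p%:R * Mb) = _); last first.
  by rewrite sumr_const_nat subn0 [RHS]mulr_natl.
apply: ler_sum_nat => m /andP [_ hm].
have hMb := Mb_ge0.
have key : forall a b : nat, (a < p)%N -> (b < p)%N -> (b <= a)%N ->
    `|v (1 + a%:Z) - v (1 + b%:Z)| <= p%:R * Mb.
  move=> a b ha hb hab.
  have hab' : 1 + b%:Z <= 1 + a%:Z by lia.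
  have := @lip_int R v Mb (1 + b%:Z) (1 + a%:Z) hab' (fun j _ => hvstep j).
  move/le_trans; apply; apply: ler_wpM2r => //.
  rewrite -[p%:R]/((p%:Z)%:~R) ler_int; lia.
case: (leqP m m0) => hmm.
  exact: key.
rewrite distrC; apply: key => //; exact: ltnW.
Qed.

Lemma chi_lip a b j : 1 <= a -> a <= b -> b <= N%:Z ->
  `|chi b j - chi a j| <= (b - a)%:~R * (p%:R * Mb).
Proof.
move=> ha hab hb.
apply: (@lip_int R (fun x => chi x j)) => // x hx.
apply: v_bound; lia.
Qed.
End Lip.

Section Corr.
Variable R : realType.
Variables (N p : nat) (eps : R) (psi chi : int -> int -> R) (c C : R).
Variables (idx irep icoll : nat -> int) (k : nat) (uH : int -> R).
Hypothesis hcell : cell_solution N p psi chi.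
Hypothesis hpsi : forall i j, c <= psi i j <= C.
Hypothesis hc : 0 < c.
Hypothesis hp : (0 < p)%N.
Hypothesis heps : 0 < eps.

Definition slope := (uH (idx k.+1) - uH (idx k)) / (idx k.+1 - idx k)%:~R.
Definition sk := slope / eps.
Definition w0 := fun i => eps * sk * chi (icoll k) i.

Lemma Dop_ell i : Dop eps (ell idx k uH) i = sk.
Proof.
rewrite /Dop /ell /sk -/slope.
have -> : i + 1 - idx k = (i - idx k) + 1 by ring.
rewrite intrD; congr (_ / _); ring.
Qed.

Lemma Dop_w0 i : Dop eps w0 i = sk * DY chi (icoll k) i.
Proof.
rewrite /Dop /w0 /DY; field; exact: lt0r_neq0.
Qed.

Lemma Dop_add (f g : int -> R) i : Dop eps (fun j => f j + g j) i = Dop eps f i + Dop eps g i.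
Proof. rewrite /Dop; field; exact: lt0r_neq0. Qed.

Lemma Dop_sub (f g : int -> R) i : Dop eps (fun j => f j - g j) i = Dop eps f i - Dop eps g i.
Proof. rewrite /Dop; field; exact: lt0r_neq0. Qed.

Lemma Dop_ellw0 i : Dop eps (fun j => ell idx k uH j + w0 j) i = sk * (1 + DY chi (icoll k) i).
Proof. rewrite Dop_add Dop_ell Dop_w0; ring. Qed.

Lemma psi_Dop_ellw0 i : psi (icoll k) i * Dop eps (fun j => ell idx k uH j + w0 j) i =
  sk * Af psi chi (icoll k).
Proof.
by rewrite Dop_ellw0 -(q_const hcell (icoll k) i) /qf mulrCA.
Qed.

Lemma chi_sum0 x : \sum_(1 <= j < p.+1) chi x j%:Z = 0.
Proof.
case: hcell => _ /(_ x) /eqP; rewrite mulf_eq0 invr_eq0 pnatr_eq0 (negbTE (lt0n_neq0 hp)) /=.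
by move/eqP.
Qed.

Lemma w0_corr : cell_corr p eps psi irep icoll idx k uH w0.
Proof.
split.
  split.
    by move=> j; rewrite /w0; case: hcell => /(_ (icoll k) j) [_ ->].
  by rewrite /w0 -mulr_sumr chi_sum0 mulr0.
move=> s [hs _].
rewrite /ip_rep /psi_coll.
rewrite (eq_bigr (fun m => (sk * Af psi chi (icoll k) / eps) *
     (s (irep k + m%:Z + 1) - s (irep k + m%:Z)))); last first.
  by move=> m _; rewrite psi_Dop_ellw0 /Dop; field; exact: lt0r_neq0.
by rewrite -mulr_sumr tele_int hs subrr !mulr0.
Qed.

Lemma corr_unique w1 : cell_corr p eps psi irep icoll idx k uH w1 -> w1 = w0.
Proof.
move=> [[hper1 hsum1] h1].
have [[hper0 hsum0] h0] := w0_corr.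
pose d := fun j => w1 j - w0 j.
have hdper : forall j, d (j + p%:Z) = d j by move=> j; rewrite /d hper1 hper0.
have hdsum : \sum_(1 <= j < p.+1) d j%:Z = 0 by rewrite /d sumrB hsum1 hsum0 subrr.
have hd : Usharp p d by [].
have := h1 d hd; have := h0 d hd.
rewrite /ip_rep => e0 e1.
have hp' : (p%:R : R)^-1 != 0 by rewrite invr_eq0 pnatr_eq0 -lt0n.
move: e0 e1; rewrite /psi_coll.
move/eqP; rewrite mulf_eq0 (negbTE hp') /= => /eqP e0.
move/eqP; rewrite mulf_eq0 (negbTE hp') /= => /eqP e1.
have hsq : \sum_(0 <= m < p) psi (icoll k) (irep k + m%:Z) * (Dop eps d (irep k + m%:Z))^+2 = 0.
  rewrite -[RHS](subrr (0 : R)) -[X in _ = X - _]e1 -[X in _ = _ - X]e0 -sumrB.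
  apply: eq_bigr => m _.
  rewrite /d Dop_sub.
  have -> : Dop eps (fun j => ell idx k uH j + w1 j) (irep k + m%:Z) =
     Dop eps (ell idx k uH) (irep k + m%:Z) + Dop eps w1 (irep k + m%:Z) by rewrite Dop_add.
  have -> : Dop eps (fun j => ell idx k uH j + w0 j) (irep k + m%:Z) =
     Dop eps (ell idx k uH) (irep k + m%:Z) + Dop eps w0 (irep k + m%:Z) by rewrite Dop_add.
  ring.
have hz : forall m, (m < p)%N -> Dop eps d (irep k + m%:Z) = 0.
  move=> m hm.
  move: hsq; rewrite big_mkord => hsq.
  have hnn : forall i : 'I_p, predT i -> 0 <= psi (icoll k) (irep k + (nat_of_ord i)%:Z) *
          Dop eps d (irep k + (nat_of_ord i)%:Z) ^+ 2.
    by move=> i _; rewrite mulr_ge0 ?sqr_ge0 // ltW // (psi_pos hpsi hc).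
  have := psumr_eq0P hnn hsq (i := Ordinal hm) isT.
  move=> /= /eqP; rewrite mulf_eq0 (gt_eqF (psi_pos hpsi hc _ _)) /= sqrf_eq0.
  by move/eqP.
have hconst : forall m, (m <= p)%N -> d (irep k + m%:Z) = d (irep k).
  elim=> [|m IH] hm; first by rewrite addr0.
  have := hz m hm; rewrite /Dop => /eqP; rewrite mulf_eq0 invr_eq0 (gt_eqF heps) orbF subr_eq0.
  rewrite -addn1 PoszD addrA => /eqP ->; apply: IH; exact: ltnW.
have hall : forall j, d j = d (irep k).
  move=> j; have [m hm ->] := per_red hp hdper (irep k) j.
  by apply: hconst; exact: ltnW.
have hd0 : d (irep k) = 0.
  move: hdsum; rewrite (eq_bigr (fun _ => d (irep k))); last by move=> j _; rewrite hall.
  rewrite sumr_const_nat subSS subn0 => /eqP; rewrite -mulr_natl mulf_eq0 pnatr_eq0 (negbTE (lt0n_neq0 hp)) /=.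
  by move/eqP.
apply: funext => j; apply/eqP; rewrite -subr_eq0; apply/eqP.
by have := hall j; rewrite hd0.
Qed.

Lemma wcorr_eq : wcorr p eps psi irep icoll idx k uH = w0.
Proof.
apply: xget_unique; first exact: w0_corr.
by move=> y hy; apply: corr_unique.
Qed.

Lemma ip_rep_R :
  ip_rep p irep k
    (fun i => psi_coll psi icoll k i * Dop eps (Rk p eps psi irep icoll idx k uH) i)
    (Dop eps (Rk p eps psi irep icoll idx k uH)) = sk ^+ 2 * Af psi chi (icoll k).
Proof.
rewrite /Rk wcorr_eq /ip_rep /psi_coll.
rewrite (eq_bigr (fun m => sk ^+ 2 * Af psi chi (icoll k) *
     (1 + (chi (icoll k) (irep k + m%:Z + 1) - chi (icoll k) (irep k + m%:Z))))); last first.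
  by move=> m _; rewrite psi_Dop_ellw0 Dop_ellw0 /DY; ring.
rewrite -mulr_sumr big_split /= tele_int.
case: hcell => /(_ (icoll k) (irep k)) [_ ->] _ _.
rewrite subrr addr0 sumr_const_nat subn0 -mulr_natr mul1r.
by rewrite mulrCA mulVf ?mulr1 // pnatr_eq0 -lt0n.
Qed.

End Corr.

Section Neg.
Variable R : realType.


Lemma sumr_ge0_nat a b (F : nat -> R) : (forall i, (a <= i < b)%N -> 0 <= F i) ->
  0 <= \sum_(a <= i < b) F i.
Proof. by move=> h; rewrite big_nat_cond; apply: sumr_ge0 => i /andP [hi _]; exact: h. Qed.

Lemma term_le_sum (F : nat -> R) a b m : (forall i, (a <= i < b)%N -> 0 <= F i) ->
  (a <= m < b)%N -> F m <= \sum_(a <= i < b) F i.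
Proof.
case: b => [|b] hF /andP [ham hmb]; first by [].
rewrite (@big_cat_nat _ _ _ m a b.+1 _ _ ham (ltnW hmb)) /= big_nat_recl //=.
have h1 : 0 <= \sum_(a <= i < m) F i.
  by apply: sumr_ge0_nat => i /andP [hi1 hi2]; apply: hF; apply/andP; split => //; exact: ltn_trans hi2 hmb.
have h2 : 0 <= \sum_(m <= i < b) F i.+1.
  apply: sumr_ge0_nat => i /andP [hi1 hi2]; apply: hF; apply/andP; split.
    by apply: leq_trans ham _; apply: leq_trans hi1 _.
  by [].
lra.
Qed.

Variables (N : nat) (eps : R) (f : int -> R).
Hypothesis hN : (0 < N)%N.
Hypothesis heps : 0 < eps.
Hypothesis hNe : N%:R * eps = 1.
Hypothesis hmean : mean N f = 0.

Definition Bf := \sum_(1 <= i < N.+1) `|f i%:Z|.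

Lemma ip_ge0 (g : int -> R) : 0 <= ip N g g.
Proof.
rewrite /ip; apply: mulr_ge0; first by rewrite invr_ge0 ler0n.
by apply: sumr_ge0 => i _; rewrite -expr2 sqr_ge0.
Qed.

Lemma H1_ge0 (w : int -> R) : 0 <= H1 N eps w.
Proof. exact: sqrtr_ge0. Qed.

Lemma H1_sq (w : int -> R) : H1 N eps w ^+ 2 = ip N (Dop eps w) (Dop eps w).
Proof. by rewrite /H1 /L2 sqr_sqrtr // ip_ge0. Qed.

Lemma Dw_bound (w : int -> R) m : (1 <= m < N.+1)%N -> `|Dop eps w m%:Z| <= N%:R * H1 N eps w.
Proof.
move=> hm.
have hNR : (0 : R) < N%:R by rewrite ltr0n.
have h : Dop eps w m%:Z ^+ 2 <= N%:R * H1 N eps w ^+ 2.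
  rewrite H1_sq /ip mulrA mulfV ?mul1r ?gt_eqF //.
  rewrite expr2; apply: (term_le_sum (F := fun i => Dop eps w i%:Z * Dop eps w i%:Z)) => //.
  by move=> i _; rewrite -expr2 sqr_ge0.
have h' : N%:R * H1 N eps w ^+ 2 <= (N%:R * H1 N eps w) ^+ 2.
  rewrite exprMn expr2 ler_wpM2r ?sqr_ge0 // ?exprn_ge0 ?H1_ge0 //.
  by rewrite -[X in X <= _]mulr1 ler_wpM2l ?ler0n // ler1n.
have h3 := le_trans h h'.
have hb : 0 <= N%:R * H1 N eps w by rewrite mulr_ge0 ?ler0n ?H1_ge0.
have hn := real_normK (num_real (Dop eps w m%:Z)).
have hn0 := normr_ge0 (Dop eps w m%:Z).
rewrite -hn in h3; nra.
Qed.

Lemma ip_bound (w : int -> R) : `|ip N f w| <= Bf * H1 N eps w.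
Proof.
set T := \sum_(1 <= m < N.+1) `|w (m%:Z + 1) - w m%:Z|.
have hT : T <= N%:R * H1 N eps w.
  rewrite /T.
  have -> : N%:R * H1 N eps w = \sum_(1 <= m < N.+1) (eps * (N%:R * H1 N eps w)).
    by rewrite sumr_const_nat subSS subn0 -[RHS]mulr_natl mulrA hNe mul1r.
  apply: ler_sum_nat => m hm.
  have -> : w (m%:Z + 1) - w m%:Z = eps * Dop eps w m%:Z by rewrite /Dop; field; exact: lt0r_neq0.
  rewrite normrM (gtr0_norm heps); apply: ler_wpM2l; [exact: ltW | exact: Dw_bound].
have hdiff : forall i, (1 <= i < N.+1)%N -> `|w i%:Z - w 1| <= T.
  move=> i /andP [hi1 hi2].
  have := telescope_sumr (fun m => w m%:Z) hi1.
  rewrite (eq_bigr (fun m => w (m%:Z + 1) - w m%:Z)); last first.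
    by move=> m _; rewrite -addn1 PoszD.
  move=> <-.
  apply: le_trans (ler_norm_sum _ _ _) _.
  rewrite /T (@big_cat_nat _ _ _ i 1 N.+1 _ _ hi1 (ltnW hi2)) /= lerDl.
  by apply: sumr_ge0 => m _; exact: normr_ge0.
have e : ip N f w = N%:R^-1 * \sum_(1 <= i < N.+1) f i%:Z * (w i%:Z - w 1).
  move: hmean; rewrite /mean /ip => hm.
  have -> : \sum_(1 <= i < N.+1) f i%:Z * (w i%:Z - w 1) =
      \sum_(1 <= i < N.+1) f i%:Z * w i%:Z - w 1 * \sum_(1 <= i < N.+1) f i%:Z * 1.
    by rewrite mulr_sumr -sumrB; apply: eq_bigr => i _; ring.
  by rewrite mulrBr mulrCA hm mulr0 subr0.
have hs : `|\sum_(1 <= i < N.+1) f i%:Z * (w i%:Z - w 1)| <= Bf * T.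
  apply: le_trans (ler_norm_sum _ _ _) _.
  rewrite /Bf mulr_suml; apply: ler_sum_nat => i hi.
  by rewrite normrM ler_wpM2l ?normr_ge0 // hdiff.
have hNR : (0 : R) < N%:R by rewrite ltr0n.
have hNi : 0 <= N%:R^-1 :> R by rewrite invr_ge0 ltW.
have hB : 0 <= Bf by apply: sumr_ge0 => i _; exact: normr_ge0.
rewrite e normrM (ger0_norm hNi).
apply: le_trans (ler_wpM2l hNi hs) _.
apply: le_trans (ler_wpM2l hNi (ler_wpM2l hB hT)) _.
have -> : N%:R^-1 * (Bf * (N%:R * H1 N eps w)) = Bf * H1 N eps w.
  by field; rewrite gt_eqF.
exact: lexx.
Qed.


Definition Eset : set R := mkset (fun r : R => exists w : int -> R,
         [/\ Usharp N w, w <> (fun _ => 0) & r = ip N f w / H1 N eps w]).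

Lemma E_ub : has_ubound Eset.
Proof.
exists Bf => r [w [hw hne ->]].
have hB : 0 <= Bf by apply: sumr_ge0 => i _; exact: normr_ge0.
case: (eqVneq (H1 N eps w) 0) => h0.
  by rewrite h0 invr0 mulr0.
have hpos : 0 < H1 N eps w by rewrite lt_neqAle eq_sym h0 H1_ge0.
rewrite ler_pdivrMr //.
exact: le_trans (ler_norm _) (ip_bound w).
Qed.

Lemma ip_opp (g w : int -> R) : ip N g (fun i => - w i) = - ip N g w.
Proof.
by rewrite /ip -mulrN -sumrN; congr (_ * _); apply: eq_bigr => i _; rewrite mulrN.
Qed.

Lemma H1_opp (w : int -> R) : H1 N eps (fun i => - w i) = H1 N eps w.
Proof.
rewrite /H1 /L2 /ip; congr (Num.sqrt (_ * _)); apply: eq_bigr => i _.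
rewrite /Dop; field; exact: lt0r_neq0.
Qed.

Lemma Hm1_ge0 : 0 <= Hm1 N eps f.
Proof.
rewrite /Hm1 -/Eset.
case: (pselect (exists w : int -> R, Usharp N w /\ w <> (fun _ => 0))) => [[w [hw hne]] | hno].
  have h1 : Eset (ip N f w / H1 N eps w) by exists w.
  have h2 : Eset (- (ip N f w / H1 N eps w)).
    exists (fun i => - w i); split.
    - case: hw => hper hs; split; first by move=> j; rewrite hper.
      by rewrite sumrN hs oppr0.
    - move=> h; apply: hne; apply: funext => i.
      by have := congr1 (fun g => g i) h => /= /eqP; rewrite oppr_eq0 => /eqP.
    - by rewrite ip_opp H1_opp mulNr.
  have := ub_le_sup E_ub h1; have := ub_le_sup E_ub h2.
  lra.
have -> : Eset = set0.
  apply/seteqP; split => r // [w [hw hne _]]; by exfalso; apply: hno; exists w; split.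
by rewrite sup0.
Qed.

Lemma ip_le_Hm1 (u : int -> R) : Usharp N u -> ip N f u <= Hm1 N eps f * H1 N eps u.
Proof.
move=> hu.
case: (eqVneq (H1 N eps u) 0) => h0.
  rewrite h0 mulr0; apply: le_trans (ler_norm _) _.
  by apply: le_trans (ip_bound u) _; rewrite h0 mulr0.
case: (pselect (u = fun _ => 0)) => hz.
  have -> : ip N f u = 0 by rewrite hz /ip big1 ?mulr0 // => i _; rewrite mulr0.
  by rewrite mulr_ge0 ?Hm1_ge0 ?H1_ge0.
have hr : Eset (ip N f u / H1 N eps u) by exists u.
have := ub_le_sup E_ub hr; rewrite -/Eset => h.
rewrite -{1}(divfK h0 (ip N f u)); apply: ler_wpM2r => //; exact: H1_ge0.
Qed.

End Neg.

Section Mesh.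
Variable R : realType.
Variables (N p : nat) (idx irep icoll : nat -> int) (K : nat).
Hypothesis hmesh : HQC_mesh N p idx irep icoll K.

Lemma idx_ge1 k : (k <= K)%N -> 1 <= idx k.
Proof.
case: hmesh => _ h0 _ hinc _.
elim: k => [|k IH] hk; first by rewrite h0.
have := hinc k hk; have := IH (ltnW hk); lia.
Qed.

Lemma idx_mono a b : (a <= b)%N -> (b <= K)%N -> idx a <= idx b.
Proof.
case: hmesh => _ _ _ hinc _.
move=> hab; elim: b hab => [|b IH] hab hb.
  by rewrite leqn0 in hab; rewrite (eqP hab).
case: (leqP a b) => h.
  have := IH h (ltnW hb); have := hinc b hb; lia.
by have -> : a = b.+1 by apply/eqP; rewrite eqn_leq hab h.
Qed.

Lemma locate i : 1 <= i <= N%:Z -> exists2 k, (k < K)%N & idx k <= i < idx k.+1.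
Proof.
case: hmesh => hK h0 hKN hinc _ hi.
suff H : forall d n, (K - n = d)%N -> (n <= K)%N -> idx n <= i ->
   exists2 k, (k < K)%N & idx k <= i < idx k.+1.
  by apply: (H _ 0%N (erefl _)) => //; rewrite h0; lia.
elim=> [|d IH] n hd hn hi'.
  have hnK : n = K by apply/eqP; rewrite eqn_leq hn /=; move: hd; lia.
  by move: hi'; rewrite hnK hKN; lia.
have hnK : (n < K)%N by move: hd; lia.
case: (ltP i (idx n.+1)) => h.
  by exists n => //; apply/andP.
by apply: (IH n.+1) => //; move: hd; lia.
Qed.

Definition nk k := absz (idx k).

Lemma idx_nk k : (k <= K)%N -> idx k = (nk k)%:Z.
Proof. by move=> hk; rewrite /nk; have := idx_ge1 hk; case: (idx k). Qed.

Lemma sum_blocks (F : nat -> R) :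
  \sum_(1 <= i < N.+1) F i = \sum_(k < K) \sum_(nk k <= i < nk k.+1) F i.
Proof.
case: hmesh => hK h0 hKN hinc _.
suff H : forall n, (n <= K)%N ->
    \sum_(1 <= i < nk n) F i = \sum_(k < n) \sum_(nk k <= i < nk k.+1) F i.
  have := H K (leqnn K); rewrite /nk hKN /= => ->; done.
elim=> [|n IH] hn.
  by rewrite big_ord0 /nk h0 /= big_geq.
rewrite big_ord_recr /=.
have IH' := IH (ltnW hn).
rewrite -IH'.
have h1 : (1 <= nk n)%N by have := idx_ge1 (ltnW hn); rewrite idx_nk ?(ltnW hn) //; lia.
have h2 : (nk n <= nk n.+1)%N.
  have := hinc n hn; rewrite idx_nk ?(ltnW hn) // idx_nk //; lia.
by rewrite (@big_cat_nat _ _ _ (nk n) 1 (nk n.+1) _ _ h1 h2).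
Qed.

End Mesh.

Lemma bigmax_recl (R : realType) (F : nat -> R) n :
  \big[Num.max/0]_(i < n.+1) F i = Num.max (F 0%N) (\big[Num.max/0]_(i < n) F i.+1).
Proof. by rewrite big_ord_recl. Qed.

Lemma bigmax_ge (R : realType) n : forall (F : nat -> R) k, (k < n)%N ->
  F k <= \big[Num.max/0]_(i < n) F i.
Proof.
elim: n => [|n IH] // F k hk; rewrite bigmax_recl le_max.
case: k hk => [|k] hk; first by rewrite lexx.
by rewrite (IH (fun i => F i.+1)) ?orbT.
Qed.

Lemma bigmax_ge0 (R : realType) n : forall (F : nat -> R), 0 <= \big[Num.max/0]_(i < n) F i.
Proof.
elim: n => [|n IH] F; first by rewrite big_ord0.
by rewrite bigmax_recl le_max (IH (fun i => F i.+1)) orbT.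
Qed.

Lemma sum_shift_per (R : realType) (N : nat) (g : int -> R) : (forall i, g (i + N%:Z) = g i) ->
  \sum_(1 <= i < N.+1) g (i%:Z + 1) = \sum_(1 <= i < N.+1) g i%:Z.
Proof.
move=> hg.
case: N hg => [|N] hg; first by rewrite !big_geq.
rewrite [LHS]big_nat_recr // [RHS]big_nat_recl //= addrC.
have -> : g (N.+1%:Z + 1) = g 1.
  by rewrite (_ : N.+1%:Z + 1 = 1 + N.+1%:Z) ?hg // addrC.
congr (_ + _); apply: eq_bigr => i _; by rewrite -addn1 PoszD.
Qed.

Lemma sq_le (R : realType) (a b : R) : `|a| <= b -> a ^+ 2 <= b ^+ 2.
Proof.
move=> h; have hn := real_normK (num_real a); have h0 := normr_ge0 a.
rewrite -hn; nra.
Qed.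

Lemma sqrt_le (R : realType) (x b : R) : 0 <= b -> x <= b ^+ 2 -> Num.sqrt x <= b.
Proof.
move=> hb hx; apply: le_trans (ler_wsqrtr hx) _.
by rewrite sqrtr_sqr ger0_norm.
Qed.

Theorem lemma6p10 (R : realType) (c_psi C_psi C'_psi : R) (p : nat) :
  0 < c_psi -> (0 < p)%N ->
  exists C13 C14 : R,
  forall (N : nat) (eps : R) (psi chi : int -> int -> R) (f : int -> R)
         (K : nat) (idx irep icoll : nat -> int) (uH uHc : int -> R),
    (0 < N)%N -> (p %| N)%N -> 0 < eps -> N%:R * eps = 1 ->
    two_scale N p psi ->
    (forall i j : int, c_psi <= psi i j <= C_psi) ->
    (forall i j : int, 1 <= i <= N%:Z -> 1 <= j <= p%:Z ->
        `|DX eps psi i j| <= C'_psi) ->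
    cell_solution N p psi chi ->
    Uper N f -> mean N f = 0 ->
    HQC_mesh N p idx irep icoll K ->
    HQC_solution N p eps psi irep icoll idx K f uH ->
    reconstruction N p eps psi irep icoll idx K uH uHc ->
    H1 N eps (fun i => uhat eps chi uH i - uHc i)
      <= C13 * Hmax eps idx K * Hm1 N eps f /\
    L2 N (fun i => uhat eps chi uH i - uHc i)
      <= C14 * eps * Hmax eps idx K * Hm1 N eps f.
Proof.
move=> hc hp.
set L := p%:R * (C'_psi * Kc c_psi C_psi).
exists (2 * L / c_psi), (L / c_psi).
move=> N eps psi chi f K idx irep icoll uH uHc hN hpN heps hNe hper hpsi hDX hcell
  hfper hmean hmesh hsol hrec.
case: hsol => [[[huper hblk] husharp] hB].
case: hrec => hcper hrecE.
have hmesh' := hmesh; case: hmesh' => hK h0 hKN hinc hsamp.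
set Hm := Hmax eps idx K.
set U := H1 N eps uH.
have hC' : 0 <= C'_psi.
  have h1 : (1 : int) <= 1 <= N%:Z by apply/andP; split; lia.
  have h2 : (1 : int) <= 1 <= p%:Z by apply/andP; split; lia.
  exact: le_trans (normr_ge0 _) (hDX _ _ h1 h2).
have hCpos : 0 < C_psi.
  by case/andP: (hpsi 0 0) => h1 h2; exact: lt_le_trans hc (le_trans h1 h2).
have hL : 0 <= L.
  rewrite /L /Kc; apply: mulr_ge0; first exact: ler0n.
  apply: mulr_ge0 => //; apply: addr_ge0; apply: divr_ge0; apply: ltW; rewrite ?exprn_gt0 //.
have hHm : 0 <= Hm by exact: bigmax_ge0.
have hHk : forall k, (k < K)%N -> Hk eps idx k <= Hm.
  by move=> k hk; rewrite /Hm /Hmax; apply: (bigmax_ge (fun k => Hk eps idx k)).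
have hHk0 : forall k, (k < K)%N -> 0 <= Hk eps idx k.
  move=> k hk; rewrite /Hk mulr_ge0 ?ltW //.
  by rewrite ltr0z; have := hinc k hk; lia.
have hDu : forall k i, (k < K)%N -> idx k <= i < idx k.+1 -> Dop eps uH i = sk eps idx k uH.
  move=> k i hk hi.
  have [a [b hab]] := hblk k hk.
  have hik := hinc k hk.
  have e1 : uH i = a + b * (eps * i%:~R) by apply: hab; lia.
  have e2 : uH (i + 1) = a + b * (eps * (i + 1)%:~R) by apply: hab; lia.
  have e3 : uH (idx k) = a + b * (eps * (idx k)%:~R) by apply: hab; lia.
  have e4 : uH (idx k.+1) = a + b * (eps * (idx k.+1)%:~R) by apply: hab; lia.
  have hD : (idx k.+1 - idx k)%:~R != 0 :> R by rewrite intr_eq0; apply/eqP; lia.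
  rewrite /sk /slope /Dop e1 e2 e3 e4 intrB intrD.
  rewrite intrB in hD.
  field; apply/andP; split => //; exact: lt0r_neq0.
set s := fun k => sk eps idx k uH.
have hU2 : U ^+ 2 = \sum_(k < K) Hk eps idx k * s k ^+ 2.
  rewrite /U H1_sq /ip.
  have -> : N%:R^-1 = eps.
    by apply: (mulfI (x := N%:R)); [rewrite pnatr_eq0 -lt0n | rewrite hNe mulfV // pnatr_eq0 -lt0n].
  rewrite (sum_blocks hmesh) mulr_sumr; apply: eq_bigr => k _.
  have hk : (k < K)%N by [].
  have e : \sum_(nk idx k <= i < nk idx k.+1) Dop eps uH i%:Z * Dop eps uH i%:Z =
      \sum_(nk idx k <= i < nk idx k.+1) s k ^+ 2.
    apply: eq_big_nat => i hi; rewrite (hDu k) // ?expr2 //.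
    rewrite (idx_nk hmesh (ltnW hk)) (idx_nk hmesh hk); apply/andP; split; rewrite ?lez_nat ?ltz_nat; case/andP: hi => //.
  rewrite e sumr_const_nat /Hk -mulr_natl mulrA; congr (_ * _ * _).
  rewrite (idx_nk hmesh (ltnW hk)) (idx_nk hmesh hk) subzn //.
  have := hinc k hk; rewrite (idx_nk hmesh (ltnW hk)) (idx_nk hmesh hk); lia.
have hBuu : c_psi * U ^+ 2 <= ip N f uH.
  rewrite -(hB uH); last by split.
  rewrite hU2 /BHQC mulr_sumr; apply: ler_sum => k _.
  have hk : (k < K)%N by [].
  rewrite (ip_rep_R idx irep icoll k uH hcell hpsi hc hp heps) -/(s k).
  rewrite mulrCA; apply: ler_wpM2l; first exact: hHk0.
  rewrite mulrC; apply: ler_wpM2l; first exact: sqr_ge0.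
  by case/andP: (A_bounds hcell hpsi hc hp (icoll k)).
have hfU := ip_le_Hm1 hN heps hNe hmean husharp; rewrite -/U in hfU.
have hHm1 := Hm1_ge0 hN heps hNe hmean.
have hU0 : 0 <= U by exact: H1_ge0.
have hUb : U <= Hm1 N eps f / c_psi.
  rewrite ler_pdivlMr //.
  case: (eqVneq U 0) => hU; first by rewrite hU mul0r.
  have hUp : 0 < U by rewrite lt_neqAle eq_sym hU hU0.
  rewrite mulrC -(ler_pM2r hUp); apply: le_trans hfU.
  by apply: le_trans hBuu; rewrite expr2 mulrA.
set d := fun i => uhat eps chi uH i - uHc i.
have hDuper : forall i, Dop eps uH (i + N%:Z) = Dop eps uH i.
  by move=> i; rewrite /Dop addrAC !huper.
have hNp : N%:Z = (N %/ p)%:Z * p%:Z by rewrite -PoszM divnK.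
have hchiN : forall i j, chi i (j + N%:Z) = chi i j.
  move=> i j; rewrite hNp; apply: per_mult => j'.
  by case: hcell => /(_ i j') [_ ->].
have hdper : forall i, d (i + N%:Z) = d i.
  move=> i; rewrite /d /uhat hDuper huper hcper hchiN.
  by case: hcell => /(_ i i) [-> _].
have hMbL : forall x : R, x * (p%:R * Mb eps c_psi C_psi C'_psi) = (x * eps) * L.
  by move=> x; rewrite /Mb /L; ring.
have hdb : forall i, 1 <= i <= N%:Z -> `|d i| <= eps * L * Hm * `|Dop eps uH i|.
  move=> i hi.
  have [k hk hki] := locate hmesh hi.
  have [[hr1 hr2] /andP [hc1 hc2]] := hsamp k hk.
  have hik := hinc k hk.
  have hg1 := idx_ge1 hmesh (ltnW hk).
  have hgN : idx k.+1 <= N.+1%:Z by rewrite -hKN; apply: (idx_mono hmesh).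
  set c0 := icoll k.
  have hdi : d i = eps * sk eps idx k uH * (chi i i - chi c0 i).
    rewrite /d /uhat (hrecE k hk i hki) (wcorr_eq idx irep icoll k uH hcell hpsi hc hp heps).
    rewrite (hDu k i hk hki) /w0 -/c0; ring.
  have hchi : `|chi i i - chi c0 i| <= Hk eps idx k * L.
    have hc0a : 1 <= c0 by clear -hg1 hr1 hc1; lia.
    have hc0b : c0 <= N%:Z by clear -hgN hr2 hc2; lia.
    have hia : 1 <= i by clear -hi; lia.
    have hib : i <= N%:Z by clear -hi; lia.
    case: (lerP c0 i) => hci.
      have h := chi_lip hcell hpsi hc hp hN heps hper hDX i hc0a hci hib.
      rewrite hMbL in h; apply: le_trans h _.
      apply: ler_wpM2r => //; rewrite /Hk mulrC; apply: ler_wpM2l; first exact: ltW.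
      rewrite ler_int; clear -hki hr1 hc1; lia.
    rewrite distrC.
    have h := chi_lip hcell hpsi hc hp hN heps hper hDX i hia (ltW hci) hc0b.
    rewrite hMbL in h; apply: le_trans h _.
    apply: ler_wpM2r => //; rewrite /Hk mulrC; apply: ler_wpM2l; first exact: ltW.
    rewrite ler_int; clear -hki hr2 hc2; lia.
  rewrite hdi (hDu k i hk hki) -/(s k) normrM [`|eps * _|]normrM (gtr0_norm heps).
  have -> : eps * L * Hm * `|s k| = eps * `|s k| * (Hm * L) by ring.
  apply: ler_wpM2l; first by apply: mulr_ge0; [exact: ltW | exact: normr_ge0].
  apply: le_trans hchi _; apply: ler_wpM2r => //; exact: hHk.
have hdb' : forall i, 1 <= i <= N.+1%:Z -> `|d i| <= eps * L * Hm * `|Dop eps uH i|.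
  move=> i hi; case: (lerP i N%:Z) => hiN.
    by apply: hdb; clear -hi hiN; lia.
  have -> : i = 1 + N%:Z by clear -hi hiN; lia.
  rewrite hdper hDuper; apply: hdb; clear -hN; lia.
have hNi : 0 <= N%:R^-1 :> R by rewrite invr_ge0 ler0n.
have hX : 0 <= eps * L * Hm by rewrite mulr_ge0 // mulr_ge0 // ltW.
have hU2' : U ^+ 2 = N%:R^-1 * \sum_(1 <= i < N.+1) Dop eps uH i%:Z * Dop eps uH i%:Z.
  by rewrite /U H1_sq /ip.
have hL2 : L2 N d <= eps * L * Hm * U.
  rewrite /L2; apply: sqrt_le; first by rewrite mulr_ge0.
  rewrite exprMn hU2' mulrCA mulr_sumr /ip; apply: ler_wpM2l => //.
  apply: ler_sum_nat => i /andP [hi1 hi2].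
  have hb := hdb' i%:Z (ltac:(apply/andP; split; rewrite lez_nat //; exact: ltnW)).
  have := sq_le hb; rewrite exprMn real_normK ?num_real // -!expr2 //.
set Y := L * Hm.
have hY : 0 <= Y by rewrite mulr_ge0.
have hDd : forall i : nat, (1 <= i < N.+1)%N ->
    Dop eps d i%:Z * Dop eps d i%:Z <=
    2 * Y ^+ 2 * (Dop eps uH (i%:Z + 1) * Dop eps uH (i%:Z + 1) + Dop eps uH i%:Z * Dop eps uH i%:Z).
  move=> i /andP [hi1 hi2].
  have hb1 := hdb' i%:Z (ltac:(apply/andP; split; rewrite lez_nat //; exact: ltnW)).
  have hb2 := hdb' (i%:Z + 1) (ltac:(apply/andP; split; rewrite -PoszD lez_nat addn1 //; exact: ltnW)).
  have h : `|Dop eps d i%:Z| <= Y * (`|Dop eps uH (i%:Z + 1)| + `|Dop eps uH i%:Z|).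
    rewrite /Dop normrM normfV (gtr0_norm heps) ler_pdivrMr //.
    apply: le_trans (ler_normB _ _) _.
    have -> : Y * (`|(uH (i%:Z + 1 + 1) - uH (i%:Z + 1)) / eps| + `|(uH (i%:Z + 1) - uH i%:Z) / eps|) * eps
      = eps * L * Hm * `|(uH (i%:Z + 1 + 1) - uH (i%:Z + 1)) / eps| + eps * L * Hm * `|(uH (i%:Z + 1) - uH i%:Z) / eps|.
      by rewrite /Y; ring.
    exact: lerD.
  have := sq_le h; rewrite -!expr2 => h'; apply: le_trans h' _.
  have ha := real_normK (num_real (Dop eps uH (i%:Z + 1))).
  have hb := real_normK (num_real (Dop eps uH i%:Z)).
  have ha0 := normr_ge0 (Dop eps uH (i%:Z + 1)).
  have hb0 := normr_ge0 (Dop eps uH i%:Z).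
  rewrite exprMn -?expr2 -ha -hb.
  set a := `|Dop eps uH (i%:Z + 1)|; set b := `|Dop eps uH i%:Z|.
  have hY2 : 0 <= Y ^+ 2 by exact: sqr_ge0.
  have hab : (a + b) ^+ 2 <= 2 * (a ^+ 2 + b ^+ 2).
    clear; have h := sqr_ge0 (a - b); rewrite !expr2 in h *; lra.
  apply: le_trans (ler_wpM2l hY2 hab) _; rewrite mulrA [Y ^+ 2 * 2]mulrC; exact: lexx.
have hH1 : H1 N eps d <= 2 * Y * U.
  rewrite /H1 /L2; apply: sqrt_le; first by apply: mulr_ge0; [apply: mulr_ge0 | ].
  rewrite /ip.
  apply: le_trans (ler_wpM2l hNi (ler_sum_nat hDd)) _.
  rewrite -mulr_sumr big_split /=.
  rewrite (sum_shift_per (g := fun i => Dop eps uH i * Dop eps uH i)); last first.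
    by move=> i; rewrite hDuper.
  have -> : (2 * Y * U) ^+ 2 = 2 * Y ^+ 2 * (U ^+ 2 + U ^+ 2) by ring.
  by rewrite hU2' mulrCA -mulrDr.
split.
  apply: le_trans hH1 _; rewrite /Y.
  have -> : 2 * L / c_psi * Hm * Hm1 N eps f = 2 * (L * Hm) * (Hm1 N eps f / c_psi) by ring.
  by apply: ler_wpM2l => //; apply: mulr_ge0; [ | apply: mulr_ge0].
apply: le_trans hL2 _.
have -> : L / c_psi * eps * Hm * Hm1 N eps f = eps * L * Hm * (Hm1 N eps f / c_psi) by ring.
by apply: ler_wpM2l.
Qed.
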